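(* Let $X$ be a nonempty set and $F\colon X^*\to X\cup\{\varepsilon\}$ an $\varepsilon$-standard operation. The following are equivalent: (i) $F$ is associative and range-idempotent; (ii) $F$ is associative and $F(F(x),F(x))=F(x)$ for every $x\in X$; (iii) $F$ is preassociative, unarily quasi-range-idempotent, and range-idempotent; (iv) $F$ is preassociative, unarily quasi-range-idempotent, and satisfies $F_1\circ F_1=F_1$ and $F(F(x),F(x))=F(x)$ for every $x\in X$.
   Context: $X^*=\bigcup_{n\geqslant 0}X^n$ is the set of finite tuples over $X$, $X^0=\{\varepsilon\}$ with $\varepsilon\notin X$ the empty tuple; $F(\mathbf{x},\mathbf{y})$ denotes $F$ applied to the concatenation, concatenation with $\varepsilon$ leaving tuples unchanged. $F_n=F|_{X^n}$, $F^{\flat}=F|_{X^*\setminus\{\varepsilon\}}$. $F$ is $\varepsilon$-standard if $F(\varepsilon)=\varepsilon$ and $F(\mathbf{x})\neq\varepsilon$ for $\mathbf{x}\neq\varepsilon$. $F$ is associative if $F(\mathbf{x},\mathbf{y},\mathbf{z})=F(\mathbf{x},F(\mathbf{y}),\mathbf{z})$ for all $\mathbf{x},\mathbf{y},\mathbf{z}\in X^*$ (a value $\varepsilon$ treated as the empty tuple). $F$ is preassociative if $F(\mathbf{y})=F(\mathbf{y}')$ implies $F(\mathbf{x},\mathbf{y},\mathbf{z})=F(\mathbf{x},\mathbf{y}',\mathbf{z})$ for all tuples. $F$ is unarily quasi-range-idempotent if $\mathrm{ran}(F_1)=\mathrm{ran}(F^{\flat})$. $F$ is range-idempotent if $F(x,\ldots,x)=x$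 ($x$ repeated $k$ times) for every $x\in\mathrm{ran}(F^{\flat})$ and every integer $k\geqslant 1$. *)

(* Defs.v *)
(* Tuples over X are lists; X ∪ {ε} is option X (None = ε). *)
From Stdlib Require Import List.
Import ListNotations.

Definition tup {X : Type} (o : option X) : list X :=
  match o with None => [] | Some a => [a] end.

Definition eps_standard {X : Type} (F : list X -> option X) : Prop :=
  F [] = None /\ (forall x : list X, x <> [] -> F x <> None).

Definition associative {X : Type} (F : list X -> option X) : Prop :=
  forall x y z : list X, F (x ++ y ++ z) = F (x ++ tup (F y) ++ z).

Definition preassociative {X : Type} (F : list X -> option X) : Prop :=
  forall y y' : list X, F y = F y' ->
    forall x z : list X, F (x ++ y ++ z) = F (x ++ y' ++ z).

Definition unarily_quasi_range_idempotent {X : Type} (F : list X -> option X) : Prop :=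
  forall v : option X,
    (exists a : X, F [a] = v) <-> (exists x : list X, x <> [] /\ F x = v).

Definition range_idempotent {X : Type} (F : list X -> option X) : Prop :=
  forall a : X, (exists x : list X, x <> [] /\ F x = Some a) ->
    forall k : nat, 1 <= k -> F (repeat a k) = Some a.

Definition F1_idempotent {X : Type} (F : list X -> option X) : Prop :=
  forall a : X, F (tup (F [a])) = F [a].

Definition F1_square {X : Type} (F : list X -> option X) : Prop :=
  forall a : X, F (tup (F [a]) ++ tup (F [a])) = F [a].

(* Main.v *)
Require Import Defs.
From Stdlib Require Import List Lia.
Import ListNotations.

Section S.
Context {X : Type} (F : list X -> option X).

Lemma pre_assoc : F [] = None -> preassociative F ->
  (forall y, y <> [] -> F (tup (F y)) = F y) -> associative F.
Proof.
  intros H0 Hp Hy x y z. destruct y as [|b y].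
  - simpl. rewrite H0. reflexivity.
  - apply Hp. symmetry. apply Hy. discriminate.
Qed.

Lemma assoc_tup : associative F -> forall y, F (tup (F y)) = F y.
Proof. intros Ha y. pose proof (Ha [] y []) as H. simpl in H.
  rewrite !app_nil_r in H. auto. Qed.

Lemma assoc_pre : associative F -> preassociative F.
Proof. intros Ha y y' E x z. rewrite Ha, E, <- Ha. reflexivity. Qed.

Lemma assoc_uqri : eps_standard F -> associative F -> unarily_quasi_range_idempotent F.
Proof.
  intros [H0 Hn] Ha v; split.
  - intros [a Ha']. exists [a]. split; [discriminate|auto].
  - intros [x [Hx Hv]]. destruct (F x) as [b|] eqn:E.
    + exists b. rewrite <- Hv, <- E. pose proof (assoc_tup Ha x) as T.
      rewrite E in T |- *. exact T.
    + exfalso; exact (Hn x Hx E).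
Qed.

Lemma ii_ri : associative F -> F1_square F -> range_idempotent F.
Proof.
  intros Ha Hs a [x [Hx Hv]].
  assert (H1 : F [a] = Some a).
  { pose proof (assoc_tup Ha x) as T. rewrite Hv in T. exact T. }
  assert (H2 : F [a; a] = Some a).
  { pose proof (Hs a) as T. rewrite H1 in T. exact T. }
  intros k Hk. destruct k as [|k]; [lia|]. clear Hk.
  induction k as [|k IH]; [exact H1|].
  replace (repeat a (S (S k))) with ([a] ++ repeat a (S k) ++ []) by (rewrite app_nil_r; reflexivity).
  rewrite Ha, IH. exact H2.
Qed.

Lemma ri_sq : eps_standard F -> range_idempotent F -> F1_square F.
Proof.
  intros [H0 Hn] Hr a. destruct (F [a]) as [b|] eqn:E.
  - simpl. assert (Ex : exists x, x <> [] /\ F x = Some b) by (exists [a]; split; [discriminate|exact E]).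
    assert (L : 1 <= 2) by (repeat constructor).
    exact (Hr b Ex 2 L).
  - exfalso; exact (Hn [a] ltac:(discriminate) E).
Qed.

Lemma ri_idem : eps_standard F -> range_idempotent F -> F1_idempotent F.
Proof.
  intros [H0 Hn] Hr a. destruct (F [a]) as [b|] eqn:E.
  - simpl. assert (Ex : exists x, x <> [] /\ F x = Some b) by (exists [a]; split; [discriminate|exact E]).
    exact (Hr b Ex 1 (le_n 1)).
  - exfalso; exact (Hn [a] ltac:(discriminate) E).
Qed.

Lemma iii_assoc : eps_standard F -> preassociative F -> range_idempotent F -> associative F.
Proof.
  intros [H0 Hn] Hp Hr. apply (pre_assoc H0 Hp).
  intros y Hy. destruct (F y) as [b|] eqn:E.
  - simpl. exact (Hr b (ex_intro _ y (conj Hy E)) 1 (le_n 1)).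
  - exfalso; exact (Hn y Hy E).
Qed.

Lemma iv_assoc : eps_standard F -> preassociative F -> unarily_quasi_range_idempotent F ->
  F1_idempotent F -> associative F.
Proof.
  intros [H0 Hn] Hp Hu Hi. apply (pre_assoc H0 Hp).
  intros y Hy. destruct (F y) as [b|] eqn:E.
  - simpl. destruct (proj2 (Hu (Some b)) (ex_intro _ y (conj Hy E))) as [a Ea].
    pose proof (Hi a) as T. rewrite Ea in T. exact T.
  - exfalso; exact (Hn y Hy E).
Qed.
End S.

Theorem lemma5p6 (X : Type) (HX : inhabited X) (F : list X -> option X)
  (HF : eps_standard F) :
  (associative F /\ range_idempotent F <->
   associative F /\ F1_square F) /\
  (associative F /\ range_idempotent F <->
   preassociative F /\ unarily_quasi_range_idempotent F /\ range_idempotent F) /\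
  (associative F /\ range_idempotent F <->
   preassociative F /\ unarily_quasi_range_idempotent F /\
   F1_idempotent F /\ F1_square F).
Proof.
  split; [|split]; split.
  - intros [Ha Hr]. split; auto. apply ri_sq; auto.
  - intros [Ha Hs]. split; auto. apply ii_ri; auto.
  - intros [Ha Hr]. split; [apply assoc_pre; auto|split; auto]. apply assoc_uqri; auto.
  - intros [Hp [Hu Hr]]. split; auto. apply iii_assoc; auto.
  - intros [Ha Hr]. split; [apply assoc_pre; auto|split; [apply assoc_uqri; auto|]].
    split; [apply ri_idem|apply ri_sq]; auto.
  - intros [Hp [Hu [Hi Hs]]]. assert (Ha : associative F) by (apply iv_assoc; auto).
    split; auto. apply ii_ri; auto.
Qed.
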